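(* Let $(N,\langle\cdot,\cdot\rangle,\varphi)$ be a modified $H$-type group (see context), with $m=\dim\mathfrak v$. The scalar curvature of $N$ is constant and equal to $S=-\dfrac{m\xi}{4}$.
   Context: Let $N$ be a 2-step nilpotent real Lie group with Lie algebra $\mathfrak n$, Lie bracket $[\cdot,\cdot]$ and center $\mathfrak z$, endowed with a left-invariant pseudo-Riemannian metric $\langle\cdot,\cdot\rangle$ for which $\mathfrak z$ is nondegenerate. Put $\mathfrak v=\mathfrak z^\perp$. For $z\in\mathfrak z$ define $j(z)\in\mathrm{End}(\mathfrak v)$ by $\langle [x,y],z\rangle=\langle y,j(z)x\rangle$ for all $x,y\in\mathfrak v$. Given a quadratic form $\varphi$ on $\mathfrak z$, $(N,\langle\cdot,\cdot\rangle,\varphi)$ is a modified $H$-type group if $j(z)^2=-\varphi(z)\,\mathrm{Id}_{\mathfrak v}$ for all $z\in\mathfrak z$. With $\{z_1,\dots,z_p\}$ a pseudo-orthonormal basis of $\mathfrak z$, $\xi=\sum_{k}\langle z_k,z_k\rangle\varphi(z_k)$. *)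

(* Defs.v *)
(* Lie algebra = finite-dimensional real vector space (vectType). *)
From HB Require Import structures.
From mathcomp Require Import all_boot all_order all_algebra.
From mathcomp Require Import reals.
Set Implicit Arguments. Unset Strict Implicit. Unset Printing Implicit Defensive.
Import Order.TTheory GRing.Theory Num.Theory.
Local Open Scope ring_scope.

Section Defs.
Variables (R : realType) (V : vectType R).

Definition bas : (\dim (fullv : {vspace V})).-tuple V := vbasis fullv.

Definition ltrace (f : V -> V) : R :=
  \sum_(i < \dim (fullv : {vspace V})) coord bas i (f (tnth bas i)).

Definition lie_bilinear_form (g : V -> V -> R) :=
  (forall a x y z, g (a *: x + y) z = a * g x z + g y z) /\
  (forall a x y z, g z (a *: x + y) = a * g z x + g z y).
Definition lie_symmetric_form (g : V -> V -> R) := forall x y, g x y = g y x.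
Definition lie_nondegenerate_form (g : V -> V -> R) :=
  forall x, (forall y, g x y = 0) -> x = 0.

(* a bilinear bracket which is skew; Jacobi is automatic for 2-step nilpotent *)
Definition lie_bilinear_map (br : V -> V -> V) :=
  (forall a x y z, br (a *: x + y) z = a *: br x z + br y z) /\
  (forall a x y z, br z (a *: x + y) = a *: br z x + br z y).
Definition lie_skew_map (br : V -> V -> V) := forall x y, br x y = - br y x.

Definition two_step_nilpotent (br : V -> V -> V) :=
  (forall x y w, br (br x y) w = 0) /\ (exists x y, br x y != 0).

(* Levi-Civita connection of a left-invariant metric, restricted to
   left-invariant fields: Koszul formula *)
Definition is_LC_connection (g : V -> V -> R) (br : V -> V -> V)
  (nab : V -> V -> V) :=
  forall x y z, 2 * g (nab x y) z = g (br x y) z - g (br y z) x + g (br z x) y.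

Definition curv (br nab : V -> V -> V) (x y z : V) : V :=
  nab x (nab y z) - nab y (nab x z) - nab (br x y) z.

Definition ricci (br nab : V -> V -> V) (y z : V) : R :=
  ltrace (fun x => curv br nab x y z).

Definition gram (g : V -> V -> R) : 'M[R]_(\dim (fullv : {vspace V})) :=
  \matrix_(i, j) g (tnth bas i) (tnth bas j).

Definition scalar_curvature (g : V -> V -> R) (br nab : V -> V -> V) : R :=
  \sum_(i < \dim (fullv : {vspace V})) \sum_(j < \dim (fullv : {vspace V}))
    (invmx (gram g)) i j * ricci br nab (tnth bas i) (tnth bas j).

Definition pseudo_orthonormal_basis (g : V -> V -> R) (U : {vspace V})
  (zs : seq V) :=
  basis_of U zs /\
  (forall k l, (k < size zs)%N -> (l < size zs)%N -> k != l ->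
     g zs`_k zs`_l = 0) /\
  (forall k, (k < size zs)%N -> g zs`_k zs`_k = 1 \/ g zs`_k zs`_k = -1).

End Defs.

(* Main.v *)
Require Import Defs.
From HB Require Import structures.
From mathcomp Require Import all_boot all_order all_algebra.
From mathcomp Require Import reals.
From mathcomp Require Import ring lra.
Set Implicit Arguments. Unset Strict Implicit. Unset Printing Implicit Defensive.
Import Order.TTheory GRing.Theory Num.Theory.
Local Open Scope ring_scope.

Section Proof3p6.
Variables (R : realType) (V : vectType R)
  (g : V -> V -> R) (br : V -> V -> V)
  (Z Vs : {vspace V}) (J : V -> V -> V) (phi : V -> R) (nab : V -> V -> V)
  (zs : seq V).
Hypotheses (brB : lie_bilinear_map br) (brS : lie_skew_map br)
  (nil2 : two_step_nilpotent br)
  (gB : lie_bilinear_form g) (gS : lie_symmetric_form g)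
  (gN : lie_nondegenerate_form g)
  (HZ : forall x, x \in Z <-> (forall y, br x y = 0))
  (HZnd : forall z, z \in Z -> (forall w, w \in Z -> g z w = 0) -> z = 0)
  (HVs : forall x, x \in Vs <-> (forall z, z \in Z -> g x z = 0))
  (HJ : forall z x, z \in Z -> x \in Vs ->
     J z x \in Vs /\ (forall y, y \in Vs -> g (br x y) z = g y (J z x)))
  (HH : forall z x, z \in Z -> x \in Vs -> J z (J z x) = - (phi z) *: x)
  (Hnab : is_LC_connection g br nab)
  (Hzs : pseudo_orthonormal_basis g Z zs).

Lemma g0l z : g 0 z = 0.
Proof.
have := gB.1 1 0 0 z; rewrite scale1r addr0 mul1r => H.
by rewrite -{1}(addr0 (g 0 z)) in H; exact: esym (addrI _ H).
Qed.
Lemma gDl x y z : g (x + y) z = g x z + g y z.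
Proof. by have := gB.1 1 x y z; rewrite scale1r mul1r. Qed.
Lemma gZl a x z : g (a *: x) z = a * g x z.
Proof. by have := gB.1 a x 0 z; rewrite addr0 g0l addr0. Qed.
Lemma gNl x z : g (- x) z = - g x z.
Proof. by rewrite -scaleN1r gZl mulN1r. Qed.
Lemma gBl x y z : g (x - y) z = g x z - g y z.
Proof. by rewrite gDl gNl. Qed.
Lemma g0r z : g z 0 = 0. Proof. by rewrite gS g0l. Qed.
Lemma gDr x y z : g z (x + y) = g z x + g z y.
Proof. by rewrite gS gDl !(gS z). Qed.
Lemma gZr a x z : g z (a *: x) = a * g z x.
Proof. by rewrite gS gZl gS. Qed.
Lemma gNr x z : g z (- x) = - g z x.
Proof. by rewrite gS gNl gS. Qed.
Lemma gBr x y z : g z (x - y) = g z x - g z y.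
Proof. by rewrite gDr gNr. Qed.
Lemma g_suml I (r : seq I) (P : pred I) (F : I -> V) z :
  g (\sum_(i <- r | P i) F i) z = \sum_(i <- r | P i) g (F i) z.
Proof. exact: (big_morph (fun x => g x z) (fun x y => gDl x y z) (g0l z)). Qed.
Lemma g_sumr I (r : seq I) (P : pred I) (F : I -> V) z :
  g z (\sum_(i <- r | P i) F i) = \sum_(i <- r | P i) g z (F i).
Proof. rewrite gS g_suml; apply: eq_bigr => i _; by rewrite gS. Qed.

Lemma g_ext a b : (forall u, g u a = g u b) -> a = b.
Proof.
move=> H; apply/eqP; rewrite -subr_eq0; apply/eqP/gN => y.
by rewrite gBl !(gS _ y) H subrr.
Qed.

Lemma br0l z : br 0 z = 0.
Proof.
have := brB.1 1 0 0 z; rewrite scale1r addr0 scale1r => H.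
by rewrite -{1}(addr0 (br 0 z)) in H; exact: esym (addrI _ H).
Qed.
Lemma brDl x y z : br (x + y) z = br x z + br y z.
Proof. by have := brB.1 1 x y z; rewrite !scale1r. Qed.
Lemma brZl a x z : br (a *: x) z = a *: br x z.
Proof. by have := brB.1 a x 0 z; rewrite addr0 br0l addr0. Qed.
Lemma brNl x z : br (- x) z = - br x z.
Proof. by rewrite -scaleN1r brZl scaleN1r. Qed.
Lemma br0r z : br z 0 = 0. Proof. by rewrite brS br0l oppr0. Qed.
Lemma brDr x y z : br z (x + y) = br z x + br z y.
Proof. by rewrite brS brDl opprD -!brS. Qed.
Lemma brZr a x z : br z (a *: x) = a *: br z x.
Proof. by rewrite brS brZl -scalerN -brS. Qed.
Lemma brNr x z : br z (- x) = - br z x.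
Proof. by rewrite -scaleN1r brZr scaleN1r. Qed.

Lemma br_in x y : br x y \in Z.
Proof. by apply/HZ => w; exact: nil2.1. Qed.
Lemma brZ_l z y : z \in Z -> br z y = 0.
Proof. by move/HZ. Qed.
Lemma brZ_r z y : z \in Z -> br y z = 0.
Proof. by move=> /HZ Hz; rewrite brS Hz oppr0. Qed.

Local Notation s := (size zs).
Local Notation z_ k := (zs`_k).
Definition eps (k : nat) := g (z_ k) (z_ k).

Lemma zs_in (k : 'I_s) : z_ k \in Z.
Proof.
have [/andP [/eqP <- _] _] := Hzs.
by apply: memv_span; apply: mem_nth.
Qed.
Lemma eps2 (k : 'I_s) : eps k * eps k = 1.
Proof. by rewrite /eps; case: Hzs => _ [_ /(_ k (ltn_ord k))] [] ->; rewrite ?mulrNN mulr1. Qed.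
Lemma zs_orth (k l : 'I_s) : k != l -> g (z_ k) (z_ l) = 0.
Proof. by case: Hzs => _ [H _] kl; apply: H. Qed.

Lemma Z_span z : z \in Z -> z = \sum_(k < s) coord (in_tuple zs) k z *: z_ k.
Proof.
have [/andP [/eqP HZs _] _] := Hzs.
by move=> zZ; apply: coord_span; rewrite HZs.
Qed.

Lemma orthZ w : (forall k : 'I_s, g w (z_ k) = 0) -> forall z, z \in Z -> g w z = 0.
Proof.
move=> H z /Z_span ->; rewrite g_sumr big1 // => k _.
by rewrite gZr H mulr0.
Qed.

Lemma sum_delta (a : 'I_s -> R) (l : 'I_s) :
  \sum_(k < s) a k * g (z_ k) (z_ l) = a l * eps l.
Proof.
rewrite (bigD1 l) //= big1 ?addr0 // => k kl.
by rewrite zs_orth ?mulr0.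
Qed.

Definition P (x : V) : V := \sum_(k < s) (eps k * g x (z_ k)) *: z_ k.
Definition Q (x : V) : V := x - P x.

Lemma gP_zs x (l : 'I_s) : g (P x) (z_ l) = g x (z_ l).
Proof.
rewrite /P g_suml.
under eq_bigr do rewrite gZl.
by rewrite sum_delta mulrAC eps2 mul1r.
Qed.
Lemma gQ_zs x (l : 'I_s) : g (Q x) (z_ l) = 0.
Proof. by rewrite /Q gBl gP_zs subrr. Qed.
Lemma P_in x : P x \in Z.
Proof. by apply: memv_suml => k _; apply: memvZ; apply: zs_in. Qed.
Lemma Q_in x : Q x \in Vs.
Proof. by apply/HVs; apply: orthZ; exact: gQ_zs. Qed.
Lemma PQ x : x = Q x + P x.
Proof. by rewrite /Q subrK. Qed.
Lemma P_Z x : x \in Z -> P x = x.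
Proof.
move=> xZ; suff: Q x = 0 by rewrite /Q => /eqP; rewrite subr_eq0 => /eqP <-.
apply: HZnd.
  by rewrite /Q; apply: rpredB => //; exact: P_in.
exact: orthZ (gQ_zs x).
Qed.
Lemma P_Vs x : x \in Vs -> P x = 0.
Proof.
move=> /HVs H; rewrite /P big1 // => k _.
by rewrite H ?zs_in // mulr0 scale0r.
Qed.
Lemma Q_Vs x : x \in Vs -> Q x = x.
Proof. by move=> /P_Vs H; rewrite /Q H subr0. Qed.
Lemma gVZ x z : x \in Vs -> z \in Z -> g x z = 0.
Proof. by move=> /HVs H /H. Qed.

Lemma g_ZP w c : w \in Z -> g w (P c) = g w c.
Proof.
by move=> wZ; rewrite {2}(PQ c) gDr (gS w (Q c)) (gVZ (Q_in c) wZ) add0r.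
Qed.

Lemma br_QQ x u : br (Q x) (Q u) = br x u.
Proof.
rewrite [in RHS](PQ x) (brDl (Q x) (P x)) (brZ_l _ (P_in x)) addr0.
by rewrite [in RHS](PQ u) (brDr (Q u) (P u) (Q x)) (brZ_r _ (P_in u)) addr0.
Qed.


Definition jj (c x : V) : V := \sum_(k < s) (eps k * g c (z_ k)) *: J (z_ k) (Q x).

Lemma gJ u x (k : 'I_s) : g u (J (z_ k) (Q x)) = g (br x u) (z_ k).
Proof.
have [Jin HJy] := HJ (zs_in k) (Q_in x).
rewrite [in LHS](PQ u) gDl (gS (P u)) (gVZ Jin (P_in u)) addr0 -HJy ?Q_in //.
by rewrite br_QQ.
Qed.

Lemma K u c x : g u (jj c x) = g (br x u) c.
Proof.
rewrite /jj g_sumr -(g_ZP c (br_in x u)) /P g_sumr.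
by apply: eq_bigr => k _; rewrite !gZr gJ.
Qed.

Lemma jj_in c x : jj c x \in Vs.
Proof.
by apply: memv_suml => k _; apply: memvZ; exact: (HJ (zs_in k) (Q_in x)).1.
Qed.
Lemma jj_Z c x : x \in Z -> jj c x = 0.
Proof. by move=> xZ; apply: g_ext => u; rewrite K brZ_l // g0l g0r. Qed.
Lemma jj_skew c x u : g u (jj c x) = - g x (jj c u).
Proof. by rewrite !K brS gNl. Qed.
Lemma jj_linx c a x y : jj c (a *: x + y) = a *: jj c x + jj c y.
Proof. by apply: g_ext => u; rewrite gDr gZr !K brDl brZl gDl gZl. Qed.
Lemma jj_linc c d a x : jj (a *: c + d) x = a *: jj c x + jj d x.
Proof. by apply: g_ext => u; rewrite gDr gZr !K gDr gZr. Qed.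
Lemma jj_gz c d x : (forall k : 'I_s, g c (z_ k) = g d (z_ k)) -> jj c x = jj d x.
Proof. by move=> H; rewrite /jj; apply: eq_bigr => k _; rewrite H. Qed.
Lemma jj_P c x : jj (P c) x = jj c x.
Proof. by apply: jj_gz => k; rewrite gP_zs. Qed.
Lemma jj_zs (l : 'I_s) y : jj (z_ l) y = J (z_ l) (Q y).
Proof.
rewrite /jj (bigD1 l) //= big1 ?addr0 => [|k kl]; last first.
  by rewrite gS zs_orth ?mulr0 ?scale0r.
by rewrite -/(eps l) eps2 scale1r.
Qed.
Lemma jj_expand c y : jj c y = \sum_(k < s) (eps k * g c (z_ k)) *: jj (z_ k) y.
Proof. by rewrite {1}/jj; apply: eq_bigr => k _; rewrite jj_zs. Qed.
Lemma jj_sq (l : 'I_s) x : jj (z_ l) (jj (z_ l) x) = - phi (z_ l) *: Q x.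
Proof.
have [Jin _] := HJ (zs_in l) (Q_in x).
by rewrite !jj_zs (Q_Vs Jin) HH ?zs_in ?Q_in.
Qed.

Lemma nabE x y : nab x y = 2^-1 *: br x y - 2^-1 *: jj y x - 2^-1 *: jj x y.
Proof.
apply: g_ext => u; rewrite gS (gS u).
have H := Hnab x y u.
rewrite !gBl !gZl (gS (jj y x)) (gS (jj x y)) !K (brS x u) gNl.
lra.
Qed.


Local Notation n := (\dim (fullv : {vspace V})).
Local Notation b i := (tnth (bas V) i).

Definition lin (f : V -> V) := forall a x y, f (a *: x + y) = a *: f x + f y.
Definition linR (l : V -> R) := forall a x y, l (a *: x + y) = a * l x + l y.

Lemma expand u : u = \sum_(i < n) coord (bas V) i u *: b i.
Proof.
rewrite {1}(coord_vbasis (memvf u)); apply: eq_bigr => i _.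
by rewrite (tnth_nth 0).
Qed.
Lemma coord_b (i j : 'I_n) : coord (bas V) j (b i) = (i == j)%:R.
Proof. by rewrite (tnth_nth 0) coord_free //; exact: basis_free (vbasisP _). Qed.

Lemma linR0 l : linR l -> l 0 = 0.
Proof.
move=> H; have := H 1 0 0; rewrite scale1r addr0 mul1r => E.
by rewrite -{1}(addr0 (l 0)) in E; exact: esym (addrI _ E).
Qed.
Lemma linRD l : linR l -> forall x y, l (x + y) = l x + l y.
Proof. by move=> H x y; have := H 1 x y; rewrite scale1r mul1r. Qed.
Lemma linRZ l : linR l -> forall a x, l (a *: x) = a * l x.
Proof. by move=> H a x; have := H a x 0; rewrite addr0 linR0 // addr0. Qed.
Lemma linR_sum l : linR l -> forall I (r : seq I) (F : I -> V),
  l (\sum_(i <- r) F i) = \sum_(i <- r) l (F i).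
Proof. by move=> H I r F; apply: (big_morph l (linRD H) (linR0 H)). Qed.

Lemma lin0 f : lin f -> f 0 = 0.
Proof.
move=> H; have := H 1 0 0; rewrite scale1r addr0 scale1r => E.
by rewrite -{1}(addr0 (f 0)) in E; exact: esym (addrI _ E).
Qed.
Lemma linD f : lin f -> forall x y, f (x + y) = f x + f y.
Proof. by move=> H x y; have := H 1 x y; rewrite !scale1r. Qed.
Lemma linZ f : lin f -> forall a x, f (a *: x) = a *: f x.
Proof. by move=> H a x; have := H a x 0; rewrite addr0 lin0 // addr0. Qed.
Lemma linN f : lin f -> forall x, f (- x) = - f x.
Proof. by move=> H x; rewrite -scaleN1r linZ // scaleN1r. Qed.
Lemma lin_sum f : lin f -> forall I (r : seq I) (F : I -> V),
  f (\sum_(i <- r) F i) = \sum_(i <- r) f (F i).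
Proof. by move=> H I r F; apply: (big_morph f (linD H) (lin0 H)). Qed.

Lemma tr_ext (f h : V -> V) : (forall x, f x = h x) -> ltrace f = ltrace h.
Proof. by move=> H; rewrite /ltrace; apply: eq_bigr => i _; rewrite H. Qed.
Lemma tr_add (f h : V -> V) : ltrace (fun x => f x + h x) = ltrace f + ltrace h.
Proof. by rewrite /ltrace -big_split; apply: eq_bigr => i _; rewrite linearD. Qed.
Lemma tr_scale a (f : V -> V) : ltrace (fun x => a *: f x) = a * ltrace f.
Proof. by rewrite /ltrace mulr_sumr; apply: eq_bigr => i _; rewrite linearZ. Qed.
Lemma tr_opp (f : V -> V) : ltrace (fun x => - f x) = - ltrace f.
Proof.
rewrite -mulN1r -tr_scale; apply: tr_ext => x; by rewrite scaleN1r.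
Qed.
Lemma tr_sub (f h : V -> V) : ltrace (fun x => f x - h x) = ltrace f - ltrace h.
Proof. by rewrite tr_add tr_opp. Qed.
Lemma tr_sum I (r : seq I) (F : I -> V -> V) :
  ltrace (fun x => \sum_(k <- r) F k x) = \sum_(k <- r) ltrace (F k).
Proof.
rewrite /ltrace exchange_big /=; apply: eq_bigr => i _.
by rewrite linear_sum.
Qed.
Lemma tr_rank1 (l : V -> R) (u : V) : linR l -> ltrace (fun x => l x *: u) = l u.
Proof.
move=> H; rewrite /ltrace {2}(expand u) linR_sum //.
by apply: eq_bigr => i _; rewrite linearZ linRZ // mulrC.
Qed.
Lemma tr_id : ltrace (fun x : V => x) = n%:R.
Proof.
rewrite /ltrace (eq_bigr (fun _ => 1)) => [|i _]; last by rewrite coord_b eqxx.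
by rewrite sumr_const card_ord.
Qed.


Lemma lin_ext f h : (forall x, f x = h x) -> lin h -> lin f.
Proof. by move=> E H a x y; rewrite !E H. Qed.
Lemma lin_comp f h : lin f -> lin h -> lin (fun x => f (h x)).
Proof. by move=> Hf Hh a x y; rewrite Hh Hf. Qed.
Lemma lin_brl y : lin (fun x => br x y).
Proof. by move=> a x z; rewrite brB.1. Qed.
Lemma lin_brr y : lin (br y).
Proof. by move=> a x z; rewrite brB.2. Qed.
Lemma lin_jj c : lin (jj c).
Proof. by move=> a x y; rewrite jj_linx. Qed.
Lemma lin_jjc x : lin (fun c => jj c x).
Proof. by move=> a c d; rewrite jj_linc. Qed.
Lemma lin_add f h : lin f -> lin h -> lin (fun x => f x + h x).
Proof. by move=> Hf Hh c x y; rewrite Hf Hh scalerDr addrACA. Qed.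
Lemma lin_opp f : lin f -> lin (fun x => - f x).
Proof. by move=> Hf c x y; rewrite Hf opprD scalerN. Qed.
Lemma lin_scale a f : lin f -> lin (fun x => a *: f x).
Proof. by move=> Hf c x y; rewrite Hf scalerDr !scalerA mulrC. Qed.
Lemma lin_comb3 a f1 f2 f3 : lin f1 -> lin f2 -> lin f3 ->
  lin (fun x => a *: f1 x - a *: f2 x - a *: f3 x).
Proof.
move=> H1 H2 H3.
apply: lin_add; [apply: lin_add|]; try apply: lin_opp; exact: lin_scale.
Qed.
Lemma lin_nabl w : lin (fun x => nab x w).
Proof.
apply: (lin_ext (fun x => nabE x w)); apply: lin_comb3.
- exact: lin_brl.
- exact: lin_jj.
- exact: lin_jjc.
Qed.
Lemma lin_nabr y : lin (nab y).
Proof.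
apply: (lin_ext (fun x => nabE y x)); apply: lin_comb3.
- exact: lin_brr.
- exact: lin_jjc.
- exact: lin_jj.
Qed.

Lemma trZ f : lin f -> (forall x, f x \in Z) ->
  ltrace f = \sum_(k < s) eps k * g (f (z_ k)) (z_ k).
Proof.
move=> Hf HfZ.
rewrite (@tr_ext f (fun x => \sum_(k < s) (eps k * g (f x) (z_ k)) *: z_ k)); last first.
  by move=> x; rewrite -{1}(P_Z (HfZ x)).
rewrite tr_sum; apply: eq_bigr => k _.
apply: (@tr_rank1 (fun x => eps k * g (f x) (z_ k))).
by move=> a x y; rewrite Hf gDl gZl; ring.
Qed.

Lemma trP f : lin f -> (forall x, f x = f (P x)) ->
  ltrace f = \sum_(k < s) eps k * g (f (z_ k)) (z_ k).
Proof.
move=> Hf HfP.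
rewrite (@tr_ext f (fun x => \sum_(k < s) (eps k * g x (z_ k)) *: f (z_ k))); last first.
  move=> x; rewrite HfP /P lin_sum //; apply: eq_bigr => k _.
  by rewrite linZ.
rewrite tr_sum; apply: eq_bigr => k _.
rewrite (@tr_rank1 (fun x => eps k * g x (z_ k))) //.
by move=> a x y; rewrite gDl gZl; ring.
Qed.

Definition T c := ltrace (jj c).
Definition TT y w := ltrace (fun x => jj y (jj w x)).

Lemma gnab_zs x w (k : 'I_s) : g (nab x w) (z_ k) = 2^-1 * g (br x w) (z_ k).
Proof.
rewrite nabE !gBl !gZl !(gVZ (jj_in _ _) (zs_in k)); ring.
Qed.
Lemma nab_Z c w : c \in Z -> nab c w = - 2^-1 *: jj c w.
Proof.
move=> cZ; by rewrite nabE (brZ_l _ cZ) (jj_Z _ cZ) !scaler0 !sub0r oppr0 sub0r scaleNr.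
Qed.
Lemma T_scale a c : T (a *: c) = a * T c.
Proof.
rewrite /T -tr_scale; apply: tr_ext => x.
by rewrite (linZ (lin_jjc x)).
Qed.
Lemma T_opp c : T (- c) = - T c.
Proof. by rewrite -scaleN1r T_scale mulN1r. Qed.
Lemma jj_nab x w y : jj (nab x w) y = 2^-1 *: jj (br x w) y.
Proof.
rewrite -(linZ (lin_jjc y)); apply: jj_gz => k.
by rewrite gnab_zs gZl.
Qed.

Lemma term1 u : ltrace (fun x => nab x u) = - 2^-1 * T u.
Proof.
rewrite (tr_ext (fun x => nabE x u)) !tr_sub !tr_scale.
have -> : ltrace (fun x => br x u) = 0.
  rewrite (trZ (lin_brl u) (fun x => br_in x u)) big1 // => k _.
  by rewrite brZ_l ?zs_in // g0l mulr0.
have -> : ltrace (fun x => jj x u) = 0.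
  rewrite (trP (lin_jjc u) (fun x => esym (jj_P x u))) big1 // => k _.
  by rewrite gVZ ?jj_in ?zs_in // mulr0.
rewrite /T; ring.
Qed.

Lemma trbr y w : ltrace (fun x => jj (br x y) w) =
  \sum_(k < s) eps k * g y (jj (z_ k) (jj (z_ k) w)).
Proof.
rewrite (tr_ext (fun x => jj_expand (br x y) w)) tr_sum.
apply: eq_bigr => k _.
rewrite (@tr_rank1 (fun x => eps k * g (br x y) (z_ k))).
  by rewrite K.
by move=> a x z; rewrite brDl brZl gDl gZl; ring.
Qed.

Lemma term3 y w : ltrace (fun x => nab (br x y) w) =
  - 2^-1 * \sum_(k < s) eps k * g y (jj (z_ k) (jj (z_ k) w)).
Proof.
rewrite (@tr_ext _ (fun x => - 2^-1 *: jj (br x y) w)); last first.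
  by move=> x; rewrite nab_Z ?br_in.
by rewrite tr_scale trbr.
Qed.

Lemma term2 y w : ltrace (fun x => nab y (nab x w)) = 4^-1 * TT y w.
Proof.
rewrite (tr_ext (fun x => nabE y (nab x w))) !tr_sub !tr_scale.
have -> : ltrace (fun x => br y (nab x w)) =
    \sum_(k < s) eps k * (- 2^-1 * g (jj (z_ k) y) (jj (z_ k) w)).
  rewrite (trZ (lin_comp (lin_brr y) (lin_nabl w))); last by move=> x; exact: br_in.
  apply: eq_bigr => k _.
  by rewrite nab_Z ?zs_in // brZr gZl -K gS.
have -> : ltrace (fun x => jj (nab x w) y) =
    2^-1 * \sum_(k < s) eps k * - g (jj (z_ k) y) (jj (z_ k) w).
  rewrite (tr_ext (fun x => jj_nab x w y)) tr_scale trbr; congr (_ * _).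
  by apply: eq_bigr => k _; rewrite jj_skew.
have -> : ltrace (fun x => jj y (nab x w)) = - 2^-1 * TT y w.
  rewrite (@tr_ext _ (fun x => - 2^-1 *: jj y (jj w x) - 2^-1 *: jj y (jj x w)));
    last first.
    move=> x; rewrite nabE (linD (lin_jj y)) (linN (lin_jj y)) (linD (lin_jj y)).
    rewrite (linN (lin_jj y)) !(linZ (lin_jj y)) (jj_Z _ (br_in _ _)) scaler0 sub0r.
    by rewrite scaleNr.
  rewrite tr_sub !tr_scale.
  have -> : ltrace (fun x => jj y (jj x w)) = 0.
    rewrite (trP (lin_comp (lin_jj y) (lin_jjc w))); last by move=> x; rewrite jj_P.
    rewrite big1 // => k _.
    by rewrite gVZ ?jj_in ?zs_in // mulr0.
  by rewrite /TT; ring.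
set S1 := \sum_(k < s) eps k * g (jj (z_ k) y) (jj (z_ k) w).
have -> : \sum_(k < s) eps k * (- 2^-1 * g (jj (z_ k) y) (jj (z_ k) w)) = - 2^-1 * S1.
  by rewrite /S1 mulr_sumr; apply: eq_bigr => k _; ring.
have -> : \sum_(k < s) eps k * - g (jj (z_ k) y) (jj (z_ k) w) = - S1.
  by rewrite /S1 -sumrN; apply: eq_bigr => k _; ring.
by field.
Qed.

Lemma ricciE y w : ricci br nab y w =
  - 4^-1 * T (br y w) - 4^-1 * TT y w
  + 2^-1 * \sum_(k < s) eps k * g y (jj (z_ k) (jj (z_ k) w)).
Proof.
rewrite /ricci /curv !tr_sub term1 term2 term3.
have -> : T (nab y w) = 2^-1 * T (br y w).
  rewrite -T_scale /T; apply: tr_ext => x; apply: jj_gz => k.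
  by rewrite gnab_zs gZl.
by field.
Qed.


Local Notation M := (invmx (gram g)).

Lemma gram_sym : (gram g)^T = gram g.
Proof. by apply/matrixP => i j; rewrite !mxE gS. Qed.

Lemma gram_unit : gram g \in unitmx.
Proof.
rewrite -row_free_unit; apply: inj_row_free => v Hv.
set w := \sum_i v 0 i *: b i.
have Hw : forall j, g w (b j) = 0.
  move=> j; transitivity ((v *m gram g) 0 j); last by rewrite Hv mxE.
  rewrite mxE /w g_suml; apply: eq_bigr => i _; by rewrite gZl mxE.
have w0 : w = 0.
  apply: gN => y; rewrite (expand y) g_sumr big1 // => j _.
  by rewrite gZr Hw mulr0.
have /freeP Hf : free (bas V) by exact: basis_free (vbasisP _).
apply/rowP => i; rewrite mxE; apply: Hf i.
rewrite -[RHS]w0 /w; apply: eq_bigr => j _; by rewrite (tnth_nth 0).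
Qed.

Lemma M_sym i j : M i j = M j i.
Proof.
have := trmx_inv (gram g); rewrite gram_sym => E.
by move/matrixP: E => /(_ j i); rewrite mxE.
Qed.

Lemma M1 (F : V -> V) :
  \sum_i \sum_j M i j * g (b i) (F (b j)) = ltrace F.
Proof.
rewrite exchange_big /= /ltrace; apply: eq_bigr => j _.
under eq_bigr => i _ do rewrite [F (b j)]expand g_sumr mulr_sumr.
rewrite exchange_big /=.
transitivity (\sum_l coord (bas V) l (F (b j)) * (gram g *m M) l j).
  apply: eq_bigr => l _; rewrite mxE mulr_sumr; apply: eq_bigr => i _.
  by rewrite gZr !mxE gS; ring.
rewrite mulmxV ?gram_unit // (bigD1 j) //= big1 ?mxE ?eqxx ?mulr1 ?addr0 //.
by move=> l lj; rewrite mxE (negbTE lj) mulr0.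
Qed.

Lemma Mantisym (h : V -> V -> R) : (forall y w, h y w = - h w y) ->
  \sum_i \sum_j M i j * h (b i) (b j) = 0.
Proof.
move=> H; set X := \sum_i \sum_j M i j * h (b i) (b j).
have : X = - X.
  rewrite {1}/X exchange_big /= /X -sumrN; apply: eq_bigr => i _.
  rewrite -sumrN; apply: eq_bigr => j _.
  by rewrite (M_sym j i) (H (b j)) mulrN.
move=> E; lra.
Qed.

Lemma TT_g y w :
  TT y w = g y (\sum_(k < s) (eps k * TT (z_ k) w) *: z_ k).
Proof.
rewrite /TT (tr_ext (fun x => jj_expand y (jj w x))) tr_sum g_sumr.
apply: eq_bigr => k _; rewrite tr_scale gZr -/(TT (z_ k) w); ring.
Qed.

Lemma TT_lin c : linR (TT c).
Proof.
move=> a x y; rewrite /TT -tr_scale -tr_add; apply: tr_ext => u.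
by rewrite jj_linc (linD (lin_jj c)) (linZ (lin_jj c)).
Qed.

Lemma tr_FT : ltrace (fun w => \sum_(k < s) (eps k * TT (z_ k) w) *: z_ k) =
  \sum_(k < s) eps k * TT (z_ k) (z_ k).
Proof.
rewrite tr_sum; apply: eq_bigr => k _.
rewrite (@tr_rank1 (fun w => eps k * TT (z_ k) w)) //.
by move=> a x y; rewrite TT_lin; ring.
Qed.

Lemma TT_sq (k : 'I_s) : TT (z_ k) (z_ k) = - phi (z_ k) * ltrace Q.
Proof. by rewrite /TT (tr_ext (jj_sq k)) tr_scale. Qed.

Lemma trQ : ltrace Q = n%:R - s%:R.
Proof.
rewrite (@tr_ext Q (fun x => x - P x)) // tr_sub tr_id.
rewrite (@tr_ext P (fun x => \sum_(k < s) (eps k * g x (z_ k)) *: z_ k)) // tr_sum.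
congr (_ - _).
rewrite (eq_bigr (fun _ => 1)) => [|k _]; first by rewrite sumr_const card_ord.
rewrite (@tr_rank1 (fun x => eps k * g x (z_ k))); first by rewrite -/(eps k) eps2.
by move=> a x y; rewrite gDl gZl; ring.
Qed.

Lemma dimVs : (\dim Vs + s)%N = n.
Proof.
have sZ : \dim Z = s by exact: (size_basis (X := in_tuple zs) Hzs.1).
have cap : (Vs :&: Z = 0)%VS.
  apply/eqP; rewrite -subv0; apply/subvP => x; rewrite memv_cap memv0.
  move=> /andP [xV xZ]; apply/eqP; apply: HZnd => // w wZ.
  exact: gVZ xV wZ.
have sum : (Vs + Z = fullv)%VS.
  apply/eqP; rewrite eqEsubv subvf /=; apply/subvP => x _.
  rewrite (PQ x); apply: memv_add; [exact: Q_in | exact: P_in].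
by have := dimv_sum_cap Vs Z; rewrite sum cap dimv0 addn0 sZ => ->.
Qed.


Definition Cf y w := \sum_(k < s) eps k * g y (jj (z_ k) (jj (z_ k) w)).

Lemma split3 (A B C : 'I_n -> 'I_n -> R) :
  \sum_i \sum_j M i j * (A i j + B i j + C i j) =
  \sum_i \sum_j M i j * A i j + \sum_i \sum_j M i j * B i j
  + \sum_i \sum_j M i j * C i j.
Proof.
rewrite -!big_split; apply: eq_bigr => i _ /=.
rewrite -!big_split; apply: eq_bigr => j _ /=; ring.
Qed.
Lemma scal (a : R) (A : 'I_n -> 'I_n -> R) :
  \sum_i \sum_j M i j * (a * A i j) = a * \sum_i \sum_j M i j * A i j.
Proof.
rewrite mulr_sumr; apply: eq_bigr => i _.
rewrite mulr_sumr; apply: eq_bigr => j _; ring.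
Qed.

Lemma trjj2 (k : 'I_s) : ltrace (fun w => jj (z_ k) (jj (z_ k) w)) = - phi (z_ k) * ltrace Q.
Proof. by rewrite (tr_ext (jj_sq k)) tr_scale. Qed.

Lemma main : scalar_curvature g br nab =
  - ((\dim Vs)%:R * \sum_(k < s) g (z_ k) (z_ k) * phi (z_ k)) / 4.
Proof.
rewrite /scalar_curvature.
transitivity (\sum_i \sum_j M i j * ((- 4^-1) * T (br (b i) (b j))
   + (- 4^-1) * TT (b i) (b j) + 2^-1 * Cf (b i) (b j))).
  apply: eq_bigr => i _; apply: eq_bigr => j _; rewrite ricciE /Cf; ring.
rewrite split3 !scal.
rewrite (@Mantisym (fun y w => T (br y w))); last by move=> y w; rewrite brS T_opp.
have -> : \sum_i \sum_j M i j * TT (b i) (b j) = \sum_i \sum_j M i j *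
   g (b i) ((fun w => \sum_(k < s) (eps k * TT (z_ k) w) *: z_ k) (b j)).
  by apply: eq_bigr => i _; apply: eq_bigr => j _; rewrite TT_g.
rewrite (M1 (fun w => \sum_(k < s) (eps k * TT (z_ k) w) *: z_ k)) tr_FT.
have -> : \sum_i \sum_j M i j * Cf (b i) (b j) = \sum_i \sum_j M i j *
   g (b i) ((fun w => \sum_(k < s) eps k *: jj (z_ k) (jj (z_ k) w)) (b j)).
  apply: eq_bigr => i _; apply: eq_bigr => j _; rewrite /Cf g_sumr.
  by congr (_ * _); apply: eq_bigr => k _; rewrite gZr.
rewrite (M1 (fun w => \sum_(k < s) eps k *: jj (z_ k) (jj (z_ k) w))) tr_sum.
have -> : \sum_(k < s) ltrace (fun w => eps k *: jj (z_ k) (jj (z_ k) w)) =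
   - ltrace Q * \sum_(k < s) eps k * phi (z_ k).
  rewrite mulr_sumr; apply: eq_bigr => k _; rewrite tr_scale trjj2; ring.
have -> : \sum_(k < s) eps k * TT (z_ k) (z_ k) =
   - ltrace Q * \sum_(k < s) eps k * phi (z_ k).
  rewrite mulr_sumr; apply: eq_bigr => k _; rewrite TT_sq; ring.
have -> : ltrace Q = (\dim Vs)%:R by rewrite trQ -dimVs natrD addrK.
by rewrite /eps; field.
Qed.

End Proof3p6.

Unset Implicit Arguments.
Set Strict Implicit.

Theorem theorem3p6 (R : realType) (V : vectType R)
  (g : V -> V -> R) (br : V -> V -> V)
  (Z Vs : {vspace V}) (J : V -> V -> V) (phi : V -> R) (nab : V -> V -> V)
  (zs : seq V) :
  (* the Lie algebra: 2-step nilpotent *)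
  lie_bilinear_map br -> lie_skew_map br -> two_step_nilpotent br ->
  (* pseudo-Riemannian (left-invariant) metric *)
  lie_bilinear_form g -> lie_symmetric_form g -> lie_nondegenerate_form g ->
  (* Z is the center, nondegenerate; Vs = Z^perp *)
  (forall x, x \in Z <-> (forall y, br x y = 0)) ->
  (forall z, z \in Z -> (forall w, w \in Z -> g z w = 0) -> z = 0) ->
  (forall x, x \in Vs <-> (forall z, z \in Z -> g x z = 0)) ->
  (* J z = j(z) : <[x,y],z> = <y, j(z) x> on Vs *)
  (forall z x, z \in Z -> x \in Vs ->
     J z x \in Vs /\ (forall y, y \in Vs -> g (br x y) z = g y (J z x))) ->
  (* phi is a quadratic form on Z *)
  (exists B : V -> V -> R, lie_bilinear_form B /\ forall z, z \in Z -> phi z = B z z) ->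
  (* modified H-type condition *)
  (forall z x, z \in Z -> x \in Vs -> J z (J z x) = - (phi z) *: x) ->
  (* Levi-Civita connection on left-invariant fields *)
  is_LC_connection g br nab ->
  (* pseudo-orthonormal basis of Z, defining xi *)
  pseudo_orthonormal_basis g Z zs ->
  let xi := \sum_(k < size zs) g zs`_k zs`_k * phi zs`_k in
  scalar_curvature g br nab = - ((\dim Vs)%:R * xi) / 4.
Proof.
move=> brB brS nil2 gB gS gN HZ HZnd HVs HJ _ HH Hnab Hzs xi.
exact: (main brB brS nil2 gB gS gN HZ HZnd HVs HJ HH Hnab Hzs).
Qed.
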